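(* Let $k\ge1$, let $\lambda,\lambda_1$ be functions $\mathfrak U\to\mathbb N$ with $\lambda(\mathcal U)^k\le\lambda_1(\mathcal U)<|\mathcal U|$ for all $\mathcal U\in\mathfrak U$, and let $R$ be a $k$-place relation such that for each $\mathcal U$, $R[\mathcal U]$ is a relation on a set $A[\mathcal U]\subseteq\mathcal U$ with $|A[\mathcal U]|\le\lambda(\mathcal U)$. Then $Q_R\le_{\mathrm{exp}}Q^{1-1}_{\lambda_1}$.
   Context: Framework: $\mathfrak U$ is a fixed nonempty family of finite sets. A relation $R$ of arity $k$ assigns to each $\mathcal U\in\mathfrak U$ a $k$-place relation $R[\mathcal U]$ on $\mathcal U$. A class $K$ assigns to each $\mathcal U$ a set $K[\mathcal U]$ of $n(K)$-place relations on $\mathcal U$ closed under permutations of $\mathcal U$; $\exists_K=Q_K$ is the second-order quantifier ranging over $K[\mathcal U]$; $Q_R$ is $Q_{K_R}$ where $K_R[\mathcal U]$ is the set of images of $R[\mathcal U]$ under permutations of $\mathcal U$. $Q_{K_1}\le_{\mathrm{exp}}Q_{K_2}$ (expressibility) means there is a formula $\varphi(x_0,\dots,x_{n(K_1)-1},S_0,\dots,S_{m-1})$ of first-order logic extended by the quantifier $Q_{K_2}$, the same for all $\mathcal U\in\mathfrak U$, such that for every $\mathcal U$ and every $R'\in K_1[\mathcal U]$ there are $S_0,\dots,S_{m-1}\in K_2[\mathcal U]$ with $R'=\{\bar a:(\mathcal U,\bar S)\models\varphi(\bar a)\}$. $Q^{1-1}_{\lambda_1}$ is the quantifier over graphs of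 partial one-to-one functions $f$ from $\mathcal U$ to $\mathcal U$ with $|\mathrm{dom}(f)|=\lambda_1(\mathcal U)$. *)

(* Defs.v *)
From mathcomp Require Import all_boot perm.
Set Implicit Arguments. Unset Strict Implicit. Unset Printing Implicit Defensive.

(* A universe is a finite type T.  A class K of arity n assigns to each universe a set
   of n-place relations. *)

Definition perm_rel (T : finType) n (s : {perm T}) (r : {set n.-tuple T})
  : {set n.-tuple T} := [set map_tuple s t | t in r].

Definition QR_class (T : finType) n (r : {set n.-tuple T})
  : {set {set n.-tuple T}} := [set perm_rel s r | s : {perm T}].

Definition Q11_class (T : finType) (l1 : nat) : {set {set 2.-tuple T}} :=
  [set G : {set 2.-tuple T} | [exists D : {set T}, exists f : {ffun T -> T},
       [&& [forall x in D, forall y in D, (f x == f y) ==> (x == y)],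
           #|D| == l1 &
           G == [set [tuple x; f x] | x in D]]]].

(* Syntax of first-order logic (with equality) over relation variables of
   arity n, extended by the second-order quantifier Q_K ranging over the
   n-place relations of K.  De Bruijn indices: FEx binds individual
   variable 0, FQ binds relation variable 0. *)
Inductive form (n : nat) : Type :=
| FEq : nat -> nat -> form n
| FRel : nat -> n.-tuple nat -> form n
| FNot : form n -> form n
| FAnd : form n -> form n -> form n
| FEx : form n -> form n
| FQ : form n -> form n.
Arguments FEq {n}. Arguments FRel {n}. Arguments FNot {n}.
Arguments FAnd {n}. Arguments FEx {n}. Arguments FQ {n}.

(* Satisfaction; e = individual environment, eS = relation environment.
   Out-of-range variables make atoms false. *)
Fixpoint sat (T : finType) n (K : {set {set n.-tuple T}})
  (e : seq T) (eS : seq {set n.-tuple T}) (phi : form n) : Prop :=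
  match phi with
  | FEq i j => match onth e i, onth e j with
               | Some a, Some b => a = b | _, _ => False end
  | FRel s args => match onth eS s with
               | Some Sr => exists t : n.-tuple T,
                   map Some (tval t) = map (onth e) (tval args) /\ t \in Sr
               | None => False end
  | FNot p => ~ sat K e eS p
  | FAnd p q => sat K e eS p /\ sat K e eS q
  | FEx p => exists a : T, sat K (a :: e) eS p
  | FQ p => exists Sr, Sr \in K /\ sat K e (Sr :: eS) p
  end.

(* Q_{K1} <=_exp Q_{K2}: one formula phi(x_0..x_{n1-1}, S_0..S_{m-1}) of
   FO + Q_{K2}, uniform over the family, defining every R' in K1[U] from
   suitable S_j in K2[U].  x_i is individual variable i, S_j relation
   variable j. *)
Definition expressible (I : Type) (U : I -> finType) n1 n2
  (K1 : forall i, {set {set n1.-tuple (U i)}})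
  (K2 : forall i, {set {set n2.-tuple (U i)}}) : Prop :=
  exists (m : nat) (phi : form n2),
    forall i, forall R' : {set n1.-tuple (U i)}, R' \in K1 i ->
      exists S : m.-tuple {set n2.-tuple (U i)},
        (forall j : 'I_m, tnth S j \in K2 i) /\
        forall a : n1.-tuple (U i),
          a \in R' <-> sat (K2 i) (tval a) (tval S) phi.

(* Main.v *)
Require Import Defs.
From mathcomp Require Import all_boot perm zify.
Set Implicit Arguments. Unset Strict Implicit. Unset Printing Implicit Defensive.

Lemma onth_lt (T : Type) (x0 : T) (s : seq T) n :
  n < size s -> onth s n = Some (nth x0 s n).
Proof. by elim: s n => [|x s IH] [|n] //= /IH. Qed.

Lemma graphP (T : finType) (W : {set T}) (f : T -> T) u v :
  ([tuple u; v] \in [set [tuple w; f w] | w in W]) <-> (u \in W /\ v = f u).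
Proof.
split.
- case/imsetP => w Hw /(congr1 val) /= [-> ->]; by [].
- by case=> Hu ->; apply/imsetP; exists u.
Qed.

Lemma graph_Q11 (T : finType) l1 (W : {set T}) (f : T -> T) :
  #|W| = l1 -> {in W &, injective f} ->
  [set [tuple w; f w] | w in W] \in Q11_class T l1.
Proof.
move=> HW Hinj; rewrite inE; apply/existsP; exists W; apply/existsP.
exists [ffun w => f w]; apply/and3P; split.
- apply/forallP => x; apply/implyP => Hx; apply/forallP => y; apply/implyP => Hy.
  by rewrite !ffunE; apply/implyP => /eqP /Hinj -> //.
- by rewrite HW.
- by apply/eqP; apply: eq_imset => x; rewrite ffunE.
Qed.

Lemma superset_card (T : finType) (D : {set T}) n :
  #|D| <= n <= #|T| -> exists W : {set T}, D \subset W /\ #|W| = n.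
Proof.
move=> /andP [H1 H2].
have [d Hd] : exists d, n = #|D| + d by exists (n - #|D|); rewrite subnKC.
elim: d D Hd {H1} => [|d IH] D Hd; first by exists D; rewrite Hd addn0.
case: (pickP (fun z => z \notin D)) => [z Hz|Hn]; last first.
  have HD : D = setT by apply/setP => z; rewrite inE; by have := Hn z => /= /negbFE.
  by move: H2; rewrite Hd HD cardsT addnS ltnNge leq_addr.
have HDz : n = #|z |: D| + d by rewrite cardsU1 Hz add1n addSnnS.
have [W [HW1 HW2]] := IH (z |: D) HDz.
by exists W; split => //; apply: subset_trans HW1; apply: subsetUr.
Qed.

Lemma notin_set (T : finType) (W : {set T}) : #|W| < #|T| -> exists z, z \notin W.
Proof.
move=> H; case: (pickP (fun z => z \notin W)) => [z Hz|Hn]; first by exists z.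
have HD : W = setT by apply/setP => z; rewrite inE; by have := Hn z => /= /negbFE.
by move: H; rewrite HD cardsT ltnn.
Qed.

Lemma fix_repr (T : finType) l1 (Z : {set T}) : #|Z| <= l1 -> l1 < #|T| ->
  exists G, G \in Q11_class T l1 /\ forall u, ([tuple u; u] \in G) = (u \in Z).
Proof.
move=> HZ HT.
have Hc : #|Z| <= l1 <= #|T| by rewrite HZ ltnW.
have [W [sZW cW]] := superset_card Hc.
have Hc2 : #|W| < #|T| by rewrite cW.
have [z0 Hz0] := notin_set Hc2.
set src := enum (W :\: Z); set L := rcons src z0.
have Hsrc : forall w, (w \in src) = (w \in W) && (w \notin Z).
  by move=> w; rewrite mem_enum !inE andbC.
have uL : uniq L by rewrite rcons_uniq Hsrc (negbTE Hz0) enum_uniq.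
have LZ : forall y, y \in L -> y \notin Z.
  move=> y; rewrite mem_rcons in_cons Hsrc => /orP [/eqP ->|/andP [] //].
  by apply/negP => /(subsetP sZW); rewrite (negbTE Hz0).
have idx : forall w, w \in src -> index w L = index w src.
  by move=> w Hw; rewrite /L -cats1 index_cat Hw.
have szL : size L = (size src).+1 by rewrite size_rcons.
pose f w := if w \in Z then w else nth z0 L (index w L).+1.
have fL : forall w, w \in W -> w \notin Z -> f w \in L.
  move=> w Hw Hz; rewrite /f (negbTE Hz); apply: mem_nth.
  by rewrite szL ltnS idx ?Hsrc ?Hw // index_mem Hsrc Hw.
exists [set [tuple w; f w] | w in W]; split.
  apply: graph_Q11 => // w1 w2 H1 H2.
  case Z1: (w1 \in Z); case Z2: (w2 \in Z).
  - by rewrite /f Z1 Z2.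
  - move=> E; have := fL w2 H2 (negbT Z2); rewrite -E /f Z1 => /LZ; by rewrite Z1.
  - move=> E; have := fL w1 H1 (negbT Z1); rewrite E /f Z2 => /LZ; by rewrite Z2.
  have m1 : w1 \in src by rewrite Hsrc H1 Z1.
  have m2 : w2 \in src by rewrite Hsrc H2 Z2.
  rewrite /f Z1 Z2 => /eqP; rewrite nth_uniq // ?szL ?ltnS ?idx // ?index_mem //.
  move=> /eqP [] Ei; by rewrite -(nth_index z0 m1) Ei nth_index.

move=> u; apply/idP/idP.
  move/graphP => [Hu]; rewrite /f; case: ifP => // Hz Efix; exfalso.
  have mu : u \in src by rewrite Hsrc Hu Hz.
  have mL : u \in L by rewrite mem_rcons in_cons mu orbT.
  move: Efix; rewrite -{1}(nth_index z0 mL) => /eqP; rewrite nth_uniq //.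
  - by rewrite eqn_leq ltnn andbF.
  - by rewrite index_mem.
  - by rewrite szL ltnS idx // index_mem.
by move=> Hz; apply/graphP; split; [apply: (subsetP sZW)| rewrite /f Hz].
Qed.

Lemma ext_repr (T : finType) l1 (x0 : T) (D0 : {set T}) (f : T -> T) :
  #|D0| <= l1 -> l1 <= #|T| -> {in D0 &, injective f} ->
  exists G, G \in Q11_class T l1 /\
    forall x v, x \in D0 -> ([tuple x; v] \in G) = (v == f x).
Proof.
move=> HD HT Hinj.
have Hc : #|D0| <= l1 <= #|T| by rewrite HD HT.
have [W [sDW cW]] := superset_card Hc.
set src := enum (W :\: D0); set tgt := enum (~: (f @: D0)).
have Hsrc : forall w, (w \in src) = (w \in W) && (w \notin D0).
  by move=> w; rewrite mem_enum !inE andbC.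
have Hsz : size src <= size tgt.
  rewrite /src /tgt -!cardE cardsD (setIidPr sDW) cW.
  have := cardsC (f @: D0); rewrite card_in_imset //.
  by move=> E; rewrite -(leq_add2l #|D0|) E subnKC ?HD // ; rewrite cW in HT.
pose g w := if w \in D0 then f w else nth x0 tgt (index w src).
have gt : forall w, w \in src -> g w \in tgt.
  move=> w Hw; move: (Hw); rewrite Hsrc => /andP [_ Hn]; rewrite /g (negbTE Hn).
  by apply: mem_nth; apply: leq_trans Hsz; rewrite index_mem.
exists [set [tuple w; g w] | w in W]; split.
  apply: graph_Q11 => // w1 w2 H1 H2.
  case Z1: (w1 \in D0); case Z2: (w2 \in D0).
  - by rewrite /g Z1 Z2; apply: Hinj.
  - move=> E; have : g w2 \in tgt by apply: gt; rewrite Hsrc H2 Z2.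
    by rewrite -E /g Z1 mem_enum inE imset_f.
  - move=> E; have : g w1 \in tgt by apply: gt; rewrite Hsrc H1 Z1.
    by rewrite E /g Z2 mem_enum inE imset_f.
  have m1 : w1 \in src by rewrite Hsrc H1 Z1.
  have m2 : w2 \in src by rewrite Hsrc H2 Z2.
  rewrite /g Z1 Z2 => /eqP; rewrite nth_uniq ?enum_uniq //; last 2 first.
  - by apply: leq_trans Hsz; rewrite index_mem.
  - by apply: leq_trans Hsz; rewrite index_mem.
  move=> /eqP Ei; rewrite -(nth_index x0 m1) -(nth_index x0 m2).
  by rewrite Ei.
move=> x v Hx; apply/idP/idP.
  by move/graphP => [_ ->]; rewrite /g Hx.
by move/eqP => ->; apply/graphP; split; [apply: (subsetP sDW)| rewrite /g Hx].
Qed.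

Definition code (T : finType) (x0 : T) k (Rp : {set k.-tuple T}) (t : k.-tuple T) : T :=
  nth x0 (enum T) (index t (enum Rp)).
Definition dec (T : finType) (x0 : T) k (Rp : {set k.-tuple T}) (u : T) : k.-tuple T :=
  nth (nseq_tuple k x0) (enum Rp) (index u (enum T)).
Definition grp (T : finType) (x0 : T) k (Rp : {set k.-tuple T}) j x :=
  [seq t : k.-tuple T <- enum Rp | nth x0 (tval t) j == x].
Definition Cd (T : finType) (x0 : T) k (Rp : {set k.-tuple T}) :=
  [set code x0 Rp t | t in Rp].
Definition sigj (T : finType) (x0 : T) k (Rp : {set k.-tuple T}) j u :=
  if u \in Cd x0 Rp then
    code x0 Rp (next (grp x0 Rp j (nth x0 (dec x0 Rp u) j)) (dec x0 Rp u))
  else u.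
Definition head (T : finType) (x0 : T) k (Rp : {set k.-tuple T}) j x :=
  nth (nseq_tuple k x0) (grp x0 Rp j x) 0.
Definition Aj (T : finType) (x0 : T) k (Rp : {set k.-tuple T}) j :=
  [set nth x0 (val t) j | t in Rp].

Lemma code_inj (T : finType) (x0 : T) k (Rp : {set k.-tuple T}) :
  #|Rp| <= #|T| -> {in Rp &, injective (code x0 Rp)}.
Proof.
move=> H t1 t2 H1 H2; rewrite /code => /eqP; rewrite nth_uniq ?enum_uniq //; last 2 first.
- by rewrite -cardE; apply: leq_trans H; rewrite cardE index_mem mem_enum.
- by rewrite -cardE; apply: leq_trans H; rewrite cardE index_mem mem_enum.
move=> /eqP E.
have m1 : t1 \in enum Rp by rewrite mem_enum.
have m2 : t2 \in enum Rp by rewrite mem_enum.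
by rewrite -(nth_index t1 m1) E (nth_index t1 m2).
Qed.

Lemma dec_code (T : finType) (x0 : T) k (Rp : {set k.-tuple T}) t :
  #|Rp| <= #|T| -> t \in Rp -> dec x0 Rp (code x0 Rp t) = t.
Proof.
move=> H Ht; rewrite /dec /code index_uniq ?enum_uniq ?nth_index ?mem_enum //.
by rewrite -cardE; apply: leq_trans H; rewrite cardE index_mem mem_enum.
Qed.

Lemma grp_mem (T : finType) (x0 : T) k (Rp : {set k.-tuple T}) j x t :
  (t \in grp x0 Rp j x) = (t \in Rp) && (nth x0 t j == x).
Proof. by rewrite mem_filter mem_enum andbC. Qed.

Lemma grp_uniq (T : finType) (x0 : T) k (Rp : {set k.-tuple T}) j x :
  uniq (grp x0 Rp j x).
Proof. exact: filter_uniq (enum_uniq _). Qed.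

Lemma sigj_code (T : finType) (x0 : T) k (Rp : {set k.-tuple T}) j t :
  #|Rp| <= #|T| -> t \in Rp ->
  sigj x0 Rp j (code x0 Rp t) = code x0 Rp (next (grp x0 Rp j (nth x0 t j)) t).
Proof.
by move=> H Ht; rewrite /sigj imset_f // dec_code.
Qed.

Lemma sigj_inj (T : finType) (x0 : T) k (Rp : {set k.-tuple T}) j :
  #|Rp| <= #|T| -> injective (sigj x0 Rp j).
Proof.
move=> H u1 u2.
have key : forall u, u \in Cd x0 Rp -> exists2 t, t \in Rp & u = code x0 Rp t.
  by move=> u /imsetP [t Ht ->]; exists t.
have nx : forall t, t \in Rp -> next (grp x0 Rp j (nth x0 t j)) t \in grp x0 Rp j (nth x0 t j).
  by move=> t Ht; rewrite mem_next grp_mem Ht eqxx.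
case C1: (u1 \in Cd x0 Rp); case C2: (u2 \in Cd x0 Rp).
- have [t1 H1 ->] := key _ C1; have [t2 H2 ->] := key _ C2.
  rewrite !sigj_code //.
  have n1 := nx t1 H1; have n2 := nx t2 H2.
  move: (n1) (n2); rewrite !grp_mem => /andP [r1 /eqP e1] /andP [r2 /eqP e2].
  move=> /(code_inj H r1 r2) E.
  have Ej : nth x0 t1 j = nth x0 t2 j by rewrite -e1 E e2.
  move: E; rewrite Ej => /(can_inj (prev_next (grp_uniq _ _ _ _))) -> //.
- have [t1 H1 ->] := key _ C1; rewrite sigj_code // /sigj C2 => E.
  have := nx t1 H1; rewrite grp_mem => /andP [r1 _].
  by move: C2; rewrite -E imset_f.
- have [t2 H2 ->] := key _ C2; rewrite sigj_code // /sigj C1 => E.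
  have := nx t2 H2; rewrite grp_mem => /andP [r2 _].
  by move: C1; rewrite E imset_f.
- by rewrite /sigj C1 C2.
Qed.

Lemma next_nth_succ (X : eqType) (g : seq X) (t0 : X) i :
  uniq g -> i.+1 < size g -> next g (nth t0 g i) = nth t0 g i.+1.
Proof.
move=> U Hi; rewrite next_nth mem_nth ?(ltnW Hi) //.
case: g U Hi => [|y g'] // U Hi; rewrite index_uniq ?(ltnW Hi) //=.
by apply: set_nth_default.
Qed.

Definition ReachS (T : finType) l1 (Sg : {set 2.-tuple T}) d c :=
  forall G, G \in Q11_class T l1 -> [tuple d; d] \in G ->
   (forall u v, [tuple u; u] \in G -> [tuple u; v] \in Sg -> [tuple v; v] \in G) ->
   [tuple c; c] \in G.

Lemma head_grp (T : finType) (x0 : T) k (Rp : {set k.-tuple T}) j x :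
  x \in Aj x0 Rp j -> head x0 Rp j x \in grp x0 Rp j x.
Proof.
move=> /imsetP [t Ht Ex]; rewrite /head; apply: mem_nth.
have : t \in grp x0 Rp j x by rewrite grp_mem Ht Ex eqxx.
by case: (grp x0 Rp j x).
Qed.

Lemma reach_iff (T : finType) (x0 : T) k (Rp : {set k.-tuple T}) l1 j x
    (W : {set T}) c :
  #|Rp| <= l1 -> l1 < #|T| -> Cd x0 Rp \subset W -> x \in Aj x0 Rp j ->
  ReachS l1 [set [tuple w; sigj x0 Rp j w] | w in W] (code x0 Rp (head x0 Rp j x)) c
  <-> exists2 t, t \in Rp & (nth x0 t j = x /\ c = code x0 Rp t).
Proof.
move=> HR HT sCW Hx.
have HRT : #|Rp| <= #|T| by apply: leq_trans HR (ltnW HT).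
have Hh := head_grp Hx.
set g := grp x0 Rp j x.
split.
  move=> Hreach.
  set Zs := [set code x0 Rp t | t in [set t in Rp | nth x0 (tval t) j == x]].
  have cZ : #|Zs| <= l1.
    apply: leq_trans (leq_imset_card _ _) _; apply: leq_trans HR.
    by apply: subset_leq_card; apply/subsetP => t; rewrite inE => /andP [].
  have [G [GQ GZ]] := fix_repr cZ HT.
  have : [tuple c; c] \in G.
    apply: Hreach => //.
      rewrite GZ; apply: imset_f; rewrite inE; by move: Hh; rewrite grp_mem.
    move=> u v; rewrite !GZ => /imsetP [t]; rewrite inE => /andP [Ht /eqP Etx] -> /graphP [_ ->].
    rewrite sigj_code // Etx; apply: imset_f; rewrite inE.
    have : next g t \in g by rewrite mem_next grp_mem Ht Etx eqxx.
    by rewrite grp_mem.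
  rewrite GZ => /imsetP [t]; rewrite inE => /andP [Ht /eqP Etx] ->.
  by exists t.
case=> t Ht [Etx ->] G GQ Hd Hcl.
have all_g : forall i, i < size g -> [tuple code x0 Rp (nth (nseq_tuple k x0) g i); code x0 Rp (nth (nseq_tuple k x0) g i)] \in G.
  elim=> [|i IH] Hi; first exact: Hd.
  have Hi' : i < size g by apply: ltnW.
  have mi : nth (nseq_tuple k x0) g i \in g by apply: mem_nth.
  move: (mi); rewrite grp_mem => /andP [ri /eqP ei].
  apply: (Hcl _ _ (IH Hi')); apply/graphP; split.
    by apply: (subsetP sCW); apply: imset_f.
  by rewrite sigj_code // ei next_nth_succ // grp_uniq.
have tg : t \in g by rewrite grp_mem Ht Etx eqxx.
have := all_g (index t g); rewrite nth_index // index_mem; by apply.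
Qed.

Definition FTrue : form 2 := FNot (FAnd (FEq 0 0) (FNot (FEq 0 0))).
Fixpoint bigAnd (l : seq (form 2)) : form 2 :=
  match l with [::] => FTrue | p :: l' => FAnd p (bigAnd l') end.
Definition Fix0 (u : nat) : form 2 := FRel 0 [tuple u; u].
Definition Reach (si di ci : nat) : form 2 :=
  FNot (FQ (FAnd (Fix0 di) (FAnd
    (FNot (FEx (FEx (FAnd (Fix0 1) (FAnd (FRel si.+1 [tuple 1; 0]) (FNot (Fix0 0)))))))
    (FNot (Fix0 ci))))).
Definition Fj (k j : nat) : form 2 :=
  FAnd (FRel j [tuple j.+1; j.+1])
       (FEx (FAnd (FRel (k + j) [tuple j.+2; 0]) (Reach (k + k + j) 0 1))).
Definition phi (k : nat) : form 2 := FEx (bigAnd (map (Fj k) (iota 0 k))).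

Lemma satRel (T : finType) K (e : seq T) eS s i j Sr u v :
  onth eS s = Some Sr -> onth e i = Some u -> onth e j = Some v ->
  sat K e eS (FRel s [tuple i; j]) <-> [tuple u; v] \in Sr.
Proof.
move=> Hs Hi Hj /=; rewrite Hs Hi Hj; split.
  case=> t [Ht Hin].
  have E : tval t = [:: u; v].
    by case: t Ht Hin => [[|a [|b [|? ?]]] //] ? /= [-> ->].
  have Et : t = [tuple u; v] by apply: val_inj.
  by rewrite -Et.
by move=> H; exists [tuple u; v].
Qed.

Arguments satRel {T K e eS s i j Sr u v}.

Lemma satReach (T : finType) l1 (e : seq T) eS si di ci Sg d c :
  onth eS si = Some Sg -> onth e di = Some d -> onth e ci = Some c ->
  sat (Q11_class T l1) e eS (Reach si di ci) <-> ReachS l1 Sg d c.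
Proof.
move=> Hs Hd Hc.
have RG : forall G i1 j1 u v (e' : seq T), onth e' i1 = Some u -> onth e' j1 = Some v ->
   (sat (Q11_class T l1) e' (G :: eS) (FRel 0 [tuple i1; j1]) <-> [tuple u; v] \in G).
  by move=> G i1 j1 u v e' H1 H2; apply: satRel.
have RS : forall G i1 j1 u v (e' : seq T), onth e' i1 = Some u -> onth e' j1 = Some v ->
   (sat (Q11_class T l1) e' (G :: eS) (FRel si.+1 [tuple i1; j1]) <-> [tuple u; v] \in Sg).
  by move=> G i1 j1 u v e' H1 H2; apply: satRel.
split.
- move=> H G GK Gd Gcl; apply/negPn/negP => Gc; apply: H.
  exists G; split => //; split; first by apply/(RG _ _ _ _ _ _ Hd Hd).
  split.
    case=> u [v [Hu [Huv Hv]]].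
    move/(RG G 1 1 u u (v :: u :: e) erefl erefl) : Hu => Hu.
    move/(RS G 1 0 u v (v :: u :: e) erefl erefl) : Huv => Huv.
    apply: Hv; apply/(RG G 0 0 v v (v :: u :: e) erefl erefl).
    exact: Gcl Hu Huv.
  move=> /(RG G _ _ _ _ _ Hc Hc) H'; by rewrite H' in Gc.
- move=> H [G [GK [Gd [Gcl Gc]]]]; apply: Gc; apply/(RG G _ _ _ _ _ Hc Hc).
  apply: H => //; first by move/(RG G _ _ _ _ _ Hd Hd) : Gd.
  move=> u v Gu Guv; apply/negPn/negP => Gv; apply: Gcl.
  exists u, v; split; first by apply/(RG G 1 1 u u (v :: u :: e) erefl erefl).
  split; first by apply/(RS G 1 0 u v (v :: u :: e) erefl erefl).
  move=> /(RG G 0 0 v v (v :: u :: e) erefl erefl) H'; by rewrite H' in Gv.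
Qed.

Lemma satBig (T : finType) K (e : seq T) eS (F : nat -> form 2) k m :
  sat K e eS (bigAnd (map F (iota m k))) <-> forall j, m <= j < m + k -> sat K e eS (F j).
Proof.
elim: k m => [|k IH] m /=.
  split=> [_ j|_ []]; first by rewrite addn0 => /andP [/leq_ltn_trans H /H]; rewrite ltnn.
  by [].
rewrite IH; split.
  case=> H1 H2 j /andP [Hj1 Hj2].
  case: (ltngtP m j) Hj1 => // [lt _|<- _]; last by [].
  by apply: H2; rewrite lt addSnnS Hj2.
move=> H; split; first by apply: H; rewrite leqnn addnS ltnS leq_addr.
by move=> j /andP [H1 H2]; apply: H; rewrite ltnW //= -addSnnS.
Qed.

Lemma fchoice (X : Type) (x0 : X) (P : nat -> X -> Prop) n :
  (forall j, j < n -> exists x, P j x) -> exists F : nat -> X, forall j, j < n -> P j (F j).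
Proof.
elim: n => [|n IH] H; first by exists (fun _ => x0).
have [F HF] : exists F : nat -> X, forall j, j < n -> P j (F j).
  by apply: IH => j Hj; apply: H; apply: ltnW.
have [x Hx] := H n (ltnSn n).
exists (fun j => if j == n then x else F j) => j Hj.
case: eqP => [-> //|/eqP Hne]; apply: HF.
by rewrite ltn_neqAle Hne -ltnS.
Qed.

Lemma core (T : finType) k l1 (Rp : {set k.-tuple T}) :
  0 < k -> #|Rp| <= l1 -> l1 < #|T| ->
  exists S : (3 * k).-tuple {set 2.-tuple T},
    (forall j : 'I_(3 * k), tnth S j \in Q11_class T l1) /\
    forall a : k.-tuple T, a \in Rp <-> sat (Q11_class T l1) a S (phi k).
Proof.
move=> Hk HR HT.
have HRT : #|Rp| <= #|T| by apply: leq_trans HR (ltnW HT).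
have [x0 _] : exists x0 : T, x0 \notin set0 by apply: notin_set; rewrite cards0; apply: leq_ltn_trans HT.
set K := Q11_class T l1.
have cA : forall j, #|Aj x0 Rp j| <= l1 by move=> j; apply: leq_trans (leq_imset_card _ _) HR.
have [FM HM] := @fchoice _ set0 (fun j G => G \in K /\ forall u, ([tuple u; u] \in G) = (u \in Aj x0 Rp j)) k
  (fun j _ => fix_repr (cA j) HT).
have HexT : forall j, j < k -> exists G, G \in K /\ forall x v, x \in Aj x0 Rp j -> ([tuple x; v] \in G) = (v == code x0 Rp (head x0 Rp j x)).
  move=> j _; apply: ext_repr => //; first exact: ltnW.
  move=> y1 y2 H1 H2 /(code_inj HRT) E.
  have g1 := head_grp H1; have g2 := head_grp H2.
  move: (g1) (g2); rewrite !grp_mem => /andP [r1 /eqP e1] /andP [r2 /eqP e2].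
  by rewrite -e1 -e2 E.
have [FT HTt] := fchoice set0 HexT.
have HexS : forall j : nat, j < k -> exists G, G \in K /\ exists2 W : {set T}, Cd x0 Rp \subset W & G = [set [tuple w; sigj x0 Rp j w] | w in W].
  move=> j Hj.
  have cC : #|Cd x0 Rp| <= l1 <= #|T| by rewrite (leq_trans (leq_imset_card _ _) HR) ltnW.
  have [W [sW cW]] := superset_card cC.
  exists [set [tuple w; sigj x0 Rp j w] | w in W]; split; last by exists W.
  by apply: graph_Q11 => //; apply: in2W; apply: sigj_inj.
have [FS HS] := fchoice set0 HexS.
pose F n := if n < k then FM n else if n < k + k then FT (n - k) else FS (n - (k + k)).
have HSz : size (mkseq F (3 * k)) == 3 * k by rewrite size_mkseq.
exists (Tuple HSz).
have onS : forall n, n < 3 * k -> onth (tval (Tuple HSz)) n = Some (F n).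
  move=> n Hn; rewrite (onth_lt set0) /= ?size_mkseq // nth_mkseq //.
split.
  move=> j; rewrite (tnth_nth set0) /= nth_mkseq // /F.
  case: ifP => [H1|H1]; first by case: (HM j H1).
  case: ifP => [H2|H2]; first by case: (HTt (j - k)); lia.
  by case: (HS (j - (k + k))) => //; have := ltn_ord j; lia.
have oa : forall (a : k.-tuple T) j, j < k -> onth (tval a) j = Some (nth x0 a j).
  by move=> a j Hj; rewrite (onth_lt x0) // size_tuple.
have Fj_iff : forall c (a : k.-tuple T) j, j < k ->
    sat K (c :: a) (Tuple HSz) (Fj k j) <->
    (nth x0 a j \in Aj x0 Rp j /\
     exists2 t, t \in Rp & (nth x0 t j = nth x0 a j /\ c = code x0 Rp t)).
  move=> c a j Hj.
  have [GMK GMp] := HM j Hj; have [GTK GTp] := HTt j Hj.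
  have [GSK [W sW GSe]] := HS j Hj.
  have o1 : onth (tval (Tuple HSz)) j = Some (FM j) by rewrite onS /F ?Hj //; lia.
  have o2 : onth (tval (Tuple HSz)) (k + j) = Some (FT j).
    rewrite onS /F; last by lia.
    have -> : (k + j < k) = false by lia.
    have -> : (k + j < k + k) = true by lia.
    by rewrite addKn.
  have o3 : onth (tval (Tuple HSz)) (k + k + j) = Some (FS j).
    rewrite onS /F; last by lia.
    have -> : (k + k + j < k) = false by lia.
    have -> : (k + k + j < k + k) = false by lia.
    by rewrite addKn.
  have oa1 : onth (c :: tval a) j.+1 = Some (nth x0 a j) by apply: oa.
  have sR := @satRel T K.
  split.
  - case=> [H1 [d [H2 H3]]].
    move/(sR _ _ _ _ _ _ _ _ o1 oa1 oa1) : H1; rewrite GMp => Ha; split => //.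
    have oa2 : onth (d :: c :: tval a) j.+2 = Some (nth x0 a j) by apply: oa.
    have od : onth (d :: c :: tval a) 0 = Some d by [].
    have oc : onth (d :: c :: tval a) 1 = Some c by [].
    move/(sR _ _ _ _ _ _ _ _ o2 oa2 od) : H2; rewrite (GTp _ _ Ha) => /eqP Ed.
    move/(@satReach T l1 _ _ _ _ _ _ _ _ o3 od oc) : H3.
    by rewrite Ed GSe => /(reach_iff c HR HT sW Ha).
  - case=> Ha Ht; split; first by apply/(sR _ _ _ _ _ _ _ _ o1 oa1 oa1); rewrite GMp.
    set d := code x0 Rp (head x0 Rp j (nth x0 a j)).
    have oa2 : onth (d :: c :: tval a) j.+2 = Some (nth x0 a j) by apply: oa.
    have od : onth (d :: c :: tval a) 0 = Some d by [].
    have oc : onth (d :: c :: tval a) 1 = Some c by [].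
    exists d; split.
      by apply/(sR _ _ _ _ _ _ _ _ o2 oa2 od); rewrite GTp.
    apply/(@satReach T l1 _ _ _ _ _ _ _ _ o3 od oc).
    by rewrite GSe; apply/(reach_iff c HR HT sW Ha).
move=> a; rewrite /phi; split.
  move=> Ha; exists (code x0 Rp a); apply/satBig => j /andP [_ Hj].
  apply/Fj_iff => //; split; first by apply: imset_f.
  by exists a.
case=> c /satBig H.
have [t0 Ht0 [_ Ec]] : exists2 t, t \in Rp & (nth x0 t 0 = nth x0 a 0 /\ c = code x0 Rp t).
  by have /Fj_iff := H 0 Hk => /(_ Hk) [].
suff -> : a = t0 by [].
apply: val_inj; apply: (@eq_from_nth _ x0); first by rewrite !size_tuple.
move=> j; rewrite size_tuple => Hj.
have /Fj_iff := H j Hj => /(_ Hj) [_ [t Ht [Etj Ec']]].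
have Ett : t = t0.
  by apply: (@code_inj T x0 k Rp HRT _ _ Ht Ht0); rewrite -Ec' Ec.
by rewrite -Etj Ett.
Qed.

Lemma card_rel_le (T : finType) k (R : {set k.-tuple T}) (A : {set T}) :
  (forall t : k.-tuple T, t \in R -> forall x, x \in tval t -> x \in A) ->
  #|R| <= #|A| ^ k.
Proof.
move=> H.
have inj : {in R &, injective (fun t : k.-tuple T => [ffun j => tnth t j])}.
  move=> t1 t2 _ _ E; apply: eq_from_tnth => j.
  by move/ffunP: E => /(_ j); rewrite !ffunE.
rewrite -(card_in_imset inj) -[k in _ ^ k]card_ord -card_ffun_on.
apply: subset_leq_card; apply/subsetP => f /imsetP [t Ht ->].
by apply/ffun_onP => j; rewrite ffunE; apply: (H t Ht); apply: mem_tnth.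
Qed.

Theorem claim3p7 (I : Type) (U : I -> finType) (k : nat)
  (lam lam1 : I -> nat) (R : forall i, {set k.-tuple (U i)})
  (A : forall i, {set U i}) :
  inhabited I -> 1 <= k ->
  (forall i, lam i ^ k <= lam1 i /\ lam1 i < #|U i|) ->
  (forall i, #|A i| <= lam i) ->
  (forall i (t : k.-tuple (U i)), t \in R i -> forall x, x \in tval t -> x \in A i) ->
  expressible (fun i => QR_class (R i)) (fun i => Q11_class (U i) (lam1 i)).
Proof.
move=> _ Hk Hl HA HR.
exists (3 * k), (phi k) => i R' /imsetP [s _ ->].
have [H1 H2] := Hl i.
have cR : #|perm_rel s (R i)| <= lam1 i.
  apply: leq_trans (leq_imset_card _ _) _.
  apply: leq_trans (card_rel_le (HR i)) _.
  by apply: leq_trans H1; rewrite leq_exp2r.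
exact: core Hk cR H2.
Qed.
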